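(* Consider any sequences $\{(x_k,y_k,\gamma_k)\}_{k\ge0}$, $\{(\tilde x_k,u_k,\tilde\gamma_k)\}_{k\ge1}$ generated by the inexact symmetric proximal ADMM described in the context, and let $z_k=(x_k,y_k,\gamma_k)$ ($k\ge0$), $\tilde z_k=(\tilde x_k,y_k,\tilde\gamma_k)$ ($k\ge1$). Then for every $z^*\in T^{-1}(0)$ and every $k\ge1$, $$\|z^*-z_k\|_M^2-\|z^*-z_{k-1}\|_M^2\le\|\tilde z_k-z_k\|_M^2-\|\tilde z_k-z_{k-1}\|_M^2.$$
   Context: Let $f:\mathbb{R}^n\to(-\infty,\infty]$ and $g:\mathbb{R}^p\to(-\infty,\infty]$ be proper closed convex functions, $A\in\mathbb{R}^{m\times n}$, $B\in\mathbb{R}^{m\times p}$, $b\in\mathbb{R}^m$ (problem: $\min\{f(x)+g(y):Ax+By=b\}$). Standing assumption: there exists $(x^*,y^*,\gamma^* )$ solving the Lagrangian system $0\in\partial f(x)-A^*\gamma$, $0\in\partial g(y)-B^*\gamma$, $0=Ax+By-b$. Here $\partial$ is the subdifferential, $A^*$ the transpose, $\mathbb{S}^n_{++}$ ($\mathbb{S}^p_+$) the symmetric positive definite (semidefinite) matrices, and $\|z\|_Q=\sqrt{\langle Qz,z\rangle}$ for $Q$ positive semidefinite. Algorithm (inexact symmetric proximal ADMM): given $(x_0,y_0,\gamma_0)\in\mathbb{R}^n\times\mathbb{R}^p\times\mathbb{R}^m$, $\beta>0$, $\tilde\sigma,\hat\sigma\in[0,1)$, $G\in\mathbb{S}^n_{++}$,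 $H\in\mathbb{S}^p_+$, and $(\tau,\theta)\in\mathcal R_{\tilde\sigma}:=\{(\tau,\theta):\tau\in(-1,1-\tilde\sigma),\ \tau+\theta>0,\ (1-\tau^2)(2-\tau-\theta-\tilde\sigma)-(1-\theta)^2(1-\tau-\tilde\sigma)>0\}$. For $k=1,2,\dots$: compute $(\tilde x_k,u_k)$ with $u_k\in\partial f(\tilde x_k)-A^*\tilde\gamma_k$ and $\|\tilde x_k-x_{k-1}+G^{-1}u_k\|_G^2\le\frac{\tilde\sigma}{\beta}\|\tilde\gamma_k-\gamma_{k-1}\|^2+\hat\sigma\|\tilde x_k-x_{k-1}\|_G^2$, where $\tilde\gamma_k=\gamma_{k-1}-\beta(A\tilde x_k+By_{k-1}-b)$; set $\gamma_{k-1/2}=\gamma_{k-1}-\tau\beta(A\tilde x_k+By_{k-1}-b)$; let $y_k$ be an optimal solution of $\min_y\{g(y)-\langle\gamma_{k-1/2},By\rangle+\frac\beta2\|A\tilde x_k+By-b\|^2+\frac12\|y-y_{k-1}\|_H^2\}$; set $x_k=x_{k-1}-G^{-1}u_k$ and $\gamma_k=\gamma_{k-1/2}-\theta\beta(A\tilde x_k+By_k-b)$. Definitions: $T(x,y,\gamma)=(\partial f(x)-A^*\gamma,\ \partial g(y)-B^*\gamma,\ Ax+By-b)$; $M=\begin{bmatrix}G&0&0\\0&H+\frac{(\tau-\tau\theta+\theta)\beta}{\tau+\theta}B^*B&-\frac{\tau}{\tau+\theta}B^*\\0&-\frac{\tau}{\tau+\theta}B&\frac{1}{(\tau+\theta)\beta}I\end{bmatrix}$.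 *)

(* Defs.v *)
From mathcomp Require Import all_boot all_order all_algebra.
From mathcomp Require Import all_classical all_reals.
Set Implicit Arguments. Unset Strict Implicit. Unset Printing Implicit Defensive.
Import Order.TTheory GRing.Theory Num.Theory.
Local Open Scope ring_scope.

Section Defs.
Variable R : realType.

Definition dotv (n : nat) (a b : 'cV[R]_n) : R := (a^T *m b) 0 0.

Definition sqnormQ (n : nat) (Q : 'M[R]_n) (z : 'cV[R]_n) : R :=
  dotv (Q *m z) z.

Definition symmetric_mx (n : nat) (Q : 'M[R]_n) : Prop := Q^T = Q.
Definition posdef (n : nat) (Q : 'M[R]_n) : Prop :=
  symmetric_mx Q /\ forall z : 'cV[R]_n, z != 0 -> (0 < dotv (Q *m z) z)%R.
Definition possemidef (n : nat) (Q : 'M[R]_n) : Prop :=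
  symmetric_mx Q /\ forall z : 'cV[R]_n, (0 <= dotv (Q *m z) z)%R.

Definition proper_fun (n : nat) (f : 'cV[R]_n -> \bar R) : Prop :=
  (forall x, f x != -oo%E) /\ exists x, f x \is a fin_num.

(* closed = lower semicontinuous (coordinatewise neighbourhoods) *)
Definition closed_fun (n : nat) (f : 'cV[R]_n -> \bar R) : Prop :=
  forall (x : 'cV[R]_n) (a : R), (a%:E < f x)%E ->
    exists2 e : R, (0 < e)%R &
      forall y : 'cV[R]_n, (forall i, `|y i 0 - x i 0| < e)%R -> (a%:E < f y)%E.

Definition convex_fun (n : nat) (f : 'cV[R]_n -> \bar R) : Prop :=
  forall (x y : 'cV[R]_n) (t : R), (0 < t)%R -> (t < 1)%R ->
    (f (t *: x + (1 - t) *: y)%R <= t%:E * f x + (1 - t)%:E * f y)%E.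

Definition subgrad (n : nat) (f : 'cV[R]_n -> \bar R) (x v : 'cV[R]_n) : Prop :=
  f x \is a fin_num /\
  forall y : 'cV[R]_n, (f x + (dotv v (y - x))%:E <= f y)%E.

Definition zero_of_T (n p m : nat) (f : 'cV[R]_n -> \bar R) (g : 'cV[R]_p -> \bar R)
  (A : 'M[R]_(m, n)) (B : 'M[R]_(m, p)) (b : 'cV[R]_m)
  (x : 'cV[R]_n) (y : 'cV[R]_p) (gam : 'cV[R]_m) : Prop :=
  subgrad f x (A^T *m gam) /\ subgrad g y (B^T *m gam) /\
  (A *m x + B *m y - b = 0)%R.

Definition in_region (sig tau theta : R) : Prop :=
  (-1 < tau)%R /\ (tau < 1 - sig)%R /\ (0 < tau + theta)%R /\
  (0 < (1 - tau ^+ 2) * (2 - tau - theta - sig)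
       - (1 - theta) ^+ 2 * (1 - tau - sig))%R.

Definition stack3 (n p m : nat) (x : 'cV[R]_n) (y : 'cV[R]_p) (gam : 'cV[R]_m)
  : 'cV[R]_(n + p + m) := col_mx (col_mx x y) gam.

Definition Mmat (n p m : nat) (G : 'M[R]_n) (H : 'M[R]_p) (B : 'M[R]_(m, p))
  (beta tau theta : R) : 'M[R]_(n + p + m) :=
  (block_mx
     (block_mx G 0 0
        (H + ((tau - tau * theta + theta) * beta / (tau + theta)) *: (B^T *m B)))
     (col_mx (0 : 'M[R]_(n, m)) (- (tau / (tau + theta)) *: B^T))
     (row_mx (0 : 'M[R]_(m, n)) (- (tau / (tau + theta)) *: B))
     ((1 / ((tau + theta) * beta)) *: 1%:M))%R.

Definition ysub_obj (n p m : nat) (g : 'cV[R]_p -> \bar R)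
  (A : 'M[R]_(m, n)) (B : 'M[R]_(m, p)) (b : 'cV[R]_m) (H : 'M[R]_p) (beta : R)
  (gamhalf : 'cV[R]_m) (xt : 'cV[R]_n) (yprev : 'cV[R]_p) (y : 'cV[R]_p) : \bar R :=
  (g y + (- dotv gamhalf (B *m y)
         + beta / 2 * dotv (A *m xt + B *m y - b) (A *m xt + B *m y - b)
         + 1 / 2 * sqnormQ H (y - yprev))%:E)%E.

(* The sequences (x_k,y_k,gam_k)_{k>=0}, (xt_k,u_k,gamt_k)_{k>=1}
   are generated by the inexact symmetric proximal ADMM. Values of
   xt, u, gamt at index 0 are irrelevant. *)
Definition isp_admm (n p m : nat) (f : 'cV[R]_n -> \bar R) (g : 'cV[R]_p -> \bar R)
  (A : 'M[R]_(m, n)) (B : 'M[R]_(m, p)) (b : 'cV[R]_m)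
  (beta sigt sigh tau theta : R) (G : 'M[R]_n) (H : 'M[R]_p)
  (x : nat -> 'cV[R]_n) (y : nat -> 'cV[R]_p) (gam : nat -> 'cV[R]_m)
  (xt : nat -> 'cV[R]_n) (u : nat -> 'cV[R]_n) (gamt : nat -> 'cV[R]_m) : Prop :=
  forall k : nat, (0 < k)%N ->
    [/\ gamt k = (gam k.-1 - beta *: (A *m xt k + B *m y k.-1 - b))%R,
        subgrad f (xt k) (u k + A^T *m gamt k)%R,
        (sqnormQ G (xt k - x k.-1 + invmx G *m u k)
          <= sigt / beta * dotv (gamt k - gam k.-1) (gamt k - gam k.-1)
             + sigh * sqnormQ G (xt k - x k.-1))%R,
        (let gamhalf := (gam k.-1 - (tau * beta) *: (A *m xt k + B *m y k.-1 - b))%R in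
         (forall y' : 'cV[R]_p,
            (ysub_obj g A B b H beta gamhalf (xt k) (y k.-1) (y k)
            <= ysub_obj g A B b H beta gamhalf (xt k) (y k.-1) y')%E)
         /\ gam k = (gamhalf - (theta * beta) *: (A *m xt k + B *m y k - b))%R) &
        x k = (x k.-1 - invmx G *m u k)%R].

End Defs.

(* Main.v *)
Require Import Defs.
From mathcomp Require Import all_boot all_order all_algebra.
From mathcomp Require Import all_classical all_reals.
From mathcomp Require Import ring lra.
Set Implicit Arguments. Unset Strict Implicit.
Import Order.TTheory GRing.Theory Num.Theory.
Local Open Scope ring_scope.

Section H.
Variable R : realType.

Lemma dotvC n (a b : 'cV[R]_n) : dotv a b = dotv b a.
Proof. rewrite /dotv. have -> : b^T *m a = (a^T *m b)^T by rewrite trmx_mul trmxK. by rewrite [RHS]mxE. Qed.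

Lemma dotvDl n (a b c : 'cV[R]_n) : dotv (a + b) c = dotv a c + dotv b c.
Proof. by rewrite /dotv raddfD /= mulmxDl mxE. Qed.

Lemma dotvZl n k (a c : 'cV[R]_n) : dotv (k *: a) c = k * dotv a c.
Proof. by rewrite /dotv linearZ /= -scalemxAl mxE. Qed.

Lemma dotvNl n (a c : 'cV[R]_n) : dotv (- a) c = - dotv a c.
Proof. by rewrite -scaleN1r dotvZl mulN1r. Qed.

Lemma dotvDr n (a b c : 'cV[R]_n) : dotv c (a + b) = dotv c a + dotv c b.
Proof. by rewrite dotvC dotvDl !(dotvC c). Qed.

Lemma dotvZr n k (a c : 'cV[R]_n) : dotv c (k *: a) = k * dotv c a.
Proof. by rewrite dotvC dotvZl dotvC. Qed.

Lemma dotvNr n (a c : 'cV[R]_n) : dotv c (- a) = - dotv c a.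
Proof. by rewrite dotvC dotvNl dotvC. Qed.

Lemma dotv0l n (c : 'cV[R]_n) : dotv 0 c = 0.
Proof. by rewrite -(scale0r (0 : 'cV[R]_n)) dotvZl mul0r. Qed.

Lemma dotv0r n (c : 'cV[R]_n) : dotv c 0 = 0.
Proof. by rewrite dotvC dotv0l. Qed.

Lemma dotv_mull m n (M : 'M[R]_(m, n)) a b : dotv (M *m a) b = dotv a (M^T *m b).
Proof. by rewrite /dotv trmx_mul mulmxA. Qed.

Lemma dotv_trl m n (M : 'M[R]_(m, n)) a b : dotv (M^T *m a) b = dotv a (M *m b).
Proof. by rewrite dotv_mull trmxK. Qed.

Lemma dotv_col n1 n2 (a1 b1 : 'cV[R]_n1) (a2 b2 : 'cV[R]_n2) :
  dotv (col_mx a1 a2) (col_mx b1 b2) = dotv a1 b1 + dotv a2 b2.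
Proof. by rewrite /dotv tr_col_mx mul_row_col mxE. Qed.

Lemma limit_lem (a L C : R) :
  (forall t, 0 < t -> t < 1 -> t * a <= t * L + t ^+ 2 * C) -> a <= L.
Proof.
move=> h; rewrite leNgt; apply/negP => aL.
set e := a - L.
have e0 : 0 < e by rewrite /e subr_gt0.
have c0 : 0 <= `|C| by [].
set t := e / (e + 2 * (`|C| + 1)).
have den0 : 0 < e + 2 * (`|C| + 1) by lra.
have t0 : 0 < t by rewrite /t divr_gt0.
have t1 : t < 1 by rewrite /t ltr_pdivrMr //; lra.
have := h t t0 t1 => ht.
have h1 : e <= t * C.
  rewrite -(ler_pM2l t0) /e; rewrite expr2 in ht; lra.
have h2 : t * C <= t * `|C| by apply: ler_wpM2l; [exact: ltW | exact: ler_norm].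
have h3 : t * `|C| < e.
  rewrite /t mulrC mulrA ltr_pdivrMr //; nra.
lra.
Qed.


Lemma posdef_unit n (G : 'M[R]_n) : posdef G -> G \in unitmx.
Proof.
move=> [Gs Gp]; rewrite -row_free_unit -kermx_eq0.
apply/negPn/negP => hk.
have [i hi] : exists i, row i (kermx G) != 0.
  apply/existsP; rewrite -negb_forall; apply/negP => /forallP h0.
  move/negP: hk; apply; apply/eqP/row_matrixP => i; rewrite row0; exact/eqP.
set v := (row i (kermx G))^T.
have Gv : G *m v = 0.
  by rewrite /v -{1}Gs -trmx_mul -row_mul mulmx_ker row0 trmx0.
have := Gp v; rewrite /v trmx_eq0 => /(_ hi).
by rewrite -/v Gv dotv0l ltxx.
Qed.

Lemma reduce N (M : 'M[R]_N) a c d e : M^T = M ->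
 sqnormQ M (a - c) - sqnormQ M (a - d) - (sqnormQ M (e - c) - sqnormQ M (e - d))
 = -2 * dotv (M *m (d - c)) (e - a).
Proof.
move=> Ms.
have S v w : dotv (M *m v) w = dotv (M *m w) v by rewrite dotv_mull Ms dotvC.
rewrite /sqnormQ !mulmxBr !(dotvDl, dotvDr, dotvNl, dotvNr).
rewrite (S a c) (S a d) (S e c) (S e d).
ring.
Qed.

Lemma qexp m p (B : 'M[R]_(m,p)) (H : 'M[R]_p) (gh a c : 'cV_m) (beta t : R)
  (y0 yp d : 'cV_p) : H^T = H ->
 let q := fun y => - dotv gh (B *m y) + beta / 2 * dotv (a + B *m y - c) (a + B *m y - c)
    + 1 / 2 * sqnormQ H (y - yp) in
 q (y0 + t *: d) = q y0 + t * dotv (- (B^T *m gh) + beta *: (B^T *m (a + B *m y0 - c))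
     + H *m (y0 - yp)) d
   + t ^+ 2 * (beta / 2 * dotv (B *m d) (B *m d) + 1 / 2 * dotv (H *m d) d).
Proof.
move=> HS q; rewrite /q /sqnormQ.
have -> : a + B *m (y0 + t *: d) - c = (a + B *m y0 - c) + t *: (B *m d).
  by rewrite mulmxDr -scalemxAr addrA [LHS]addrAC.
have -> : y0 + t *: d - yp = (y0 - yp) + t *: d by rewrite addrAC.
move: (a + B *m y0 - c) => w; move: (y0 - yp) => z.
rewrite !mulmxDr -!scalemxAr !(dotvDl, dotvDr, dotvZl, dotvZr, dotvNl) !dotv_trl.
rewrite (dotvC (B *m d) w).
have -> : dotv (H *m d) z = dotv (H *m z) d by rewrite dotv_mull HS dotvC.
clear q. move: (dotv gh (B *m y0)) (dotv gh (B *m d)) (dotv w w) (dotv w (B *m d)) (dotv (B *m d) (B *m d)) (dotv (H *m z) z) (dotv (H *m z) d) (dotv (H *m d) d) => a1 a2 a3 a4 a5 a6 a7 a8.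
by field.
Qed.

End H.
Unset Implicit Arguments.

Theorem lemma2p4 (R : realType) (n p m : nat)
  (f : 'cV[R]_n -> \bar R) (g : 'cV[R]_p -> \bar R)
  (A : 'M[R]_(m, n)) (B : 'M[R]_(m, p)) (b : 'cV[R]_m)
  (beta sigt sigh tau theta : R) (G : 'M[R]_n) (H : 'M[R]_p)
  (x : nat -> 'cV[R]_n) (y : nat -> 'cV[R]_p) (gam : nat -> 'cV[R]_m)
  (xt : nat -> 'cV[R]_n) (u : nat -> 'cV[R]_n) (gamt : nat -> 'cV[R]_m) :
  proper_fun f -> closed_fun f -> convex_fun f ->
  proper_fun g -> closed_fun g -> convex_fun g ->
  (exists xs ys gs, zero_of_T f g A B b xs ys gs) ->
  0 < beta -> 0 <= sigt < 1 -> 0 <= sigh < 1 ->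
  posdef G -> possemidef H -> in_region sigt tau theta ->
  isp_admm f g A B b beta sigt sigh tau theta G H x y gam xt u gamt ->
  forall (xs : 'cV[R]_n) (ys : 'cV[R]_p) (gs : 'cV[R]_m),
    zero_of_T f g A B b xs ys gs ->
    forall k : nat, (0 < k)%N ->
      let M := Mmat G H B beta tau theta in
      let zs := stack3 xs ys gs in
      let zk := stack3 (x k) (y k) (gam k) in
      let zk1 := stack3 (x k.-1) (y k.-1) (gam k.-1) in
      let ztk := stack3 (xt k) (y k) (gamt k) in
      sqnormQ M (zs - zk) - sqnormQ M (zs - zk1)
        <= sqnormQ M (ztk - zk) - sqnormQ M (ztk - zk1).
Proof.
move=> pf _ _ pg _ cvg _ beta0 _ _ Gpd [Hsym _] [_ [_ [tt0 _]]] Hadmm xs ys gs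
  [sf [sg cons]] k k0.
case: k k0 => // k _; cbv zeta; rewrite succnK.
set M := Mmat G H B beta tau theta.
set zs := stack3 xs ys gs.
set zk := stack3 (x k.+1) (y k.+1) (gam k.+1).
set zk1 := stack3 (x k) (y k) (gam k).
set ztk := stack3 (xt k.+1) (y k.+1) (gamt k.+1).
have Gu := posdef_unit Gpd.
case: Gpd => Gsym _.
have [gt_def sfk _ yk_all xk_def] := Hadmm k.+1 isT.
case: yk_all => ymin gk_def.
rewrite /= in gt_def sfk ymin gk_def xk_def.
have Mt : M^T = M.
  rewrite /M /Mmat tr_block_mx !(tr_block_mx, tr_col_mx, tr_row_mx, trmx0, trmx1, trmxK, linearD, linearZ, trmx_mul) /=.
  by rewrite Gsym Hsym trmx_mul trmx1 !trmxK.
have := reduce zs zk zk1 ztk Mt.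
suff : 0 <= dotv (M *m (zk1 - zk)) (ztk - zs) by lra.
rewrite /zk1 /zk /ztk /zs /stack3 !opp_col_mx !add_col_mx /M /Mmat !mul_block_col mul_col_mx mul_row_col !add_col_mx !dotv_col !mul0mx !addr0 !add0r.
have ttn : tau + theta != 0 by rewrite gt_eqF.
have bn : beta != 0 by rewrite gt_eqF.
have e3 : (- (tau / (tau + theta)) *: B) *m (y k - y k.+1) + ((1 / ((tau + theta) * beta)) *: 1%:M) *m (gam k - gam k.+1) = A *m xt k.+1 + B *m y k.+1 - b.
  rewrite gk_def -!scalemxAl mul1mx !mulmxBr.
  apply/colP => i; rewrite !mxE.
  by field; rewrite bn ttn.
have e1 : G *m (x k - x k.+1) = u k.+1.
  by rewrite xk_def opprB addrC subrK mulmxA mulmxV // mul1mx.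
set rk := A *m xt k.+1 + B *m y k.+1 - b.
set V := H *m (y k - y k.+1) + ((1 - tau) * beta) *: (B^T *m (B *m (y k - y k.+1))) - (tau * beta) *: (B^T *m rk).
have e2 : (H + ((tau - tau * theta + theta) * beta / (tau + theta)) *: (B^T *m B)) *m (y k - y k.+1) + (- (tau / (tau + theta)) *: B^T) *m (gam k - gam k.+1) = V.
  rewrite /V /rk gk_def !(mulmxDl, mulmxBr, mulmxDr, mulmxN, mulmxBl) -!scalemxAl -!scalemxAr.
  rewrite !(mulmxDl, mulmxBr, mulmxDr, mulmxN, mulmxBl) -?scalemxAr !mulmxA.
  apply/colP => i; rewrite !mxE.
  by field; rewrite ttn.
rewrite e1 e2 e3.
case: sfk => fin1 ineq1; case: sf => fin2 ineq2.
have i1 := ineq1 xs; have i2 := ineq2 (xt k.+1).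
rewrite -(fineK fin1) -(fineK fin2) -!EFinD !lee_fin in i1 i2.
have Fm : dotv (u k.+1 + A^T *m gamt k.+1) (xs - xt k.+1) + dotv (A^T *m gs) (xt k.+1 - xs) <= 0 by lra.
clear i1 i2 ineq1 ineq2.
case: sg => fing ineqg.
have gk_fin : g (y k.+1) \is a fin_num.
  have := ymin ys; rewrite /ysub_obj fin_numE pg.1 /= => h.
  apply/negP => /eqP E; move: h; rewrite E addye // -(fineK fing) -EFinD leye_eq.
  by [].
set gh := gam k - (tau * beta) *: (A *m xt k.+1 + B *m y k - b).
set L := dotv (- (B^T *m gh) + beta *: (B^T *m (A *m xt k.+1 + B *m y k.+1 - b)) + H *m (y k.+1 - y k)) (ys - y k.+1).
have lim : fine (g (y k.+1)) - fine (g ys) <= L.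
  apply: (limit_lem (C := beta / 2 * dotv (B *m (ys - y k.+1)) (B *m (ys - y k.+1)) + 1 / 2 * dotv (H *m (ys - y k.+1)) (ys - y k.+1))) => t t0 t1.
  have h1 := ymin (y k.+1 + t *: (ys - y k.+1)).
  have h2 := cvg ys (y k.+1) t t0 t1.
  have veq : t *: ys + (1 - t) *: y k.+1 = y k.+1 + t *: (ys - y k.+1).
    by apply/colP => i; rewrite !mxE; ring.
  rewrite veq in h2.
  have h3 := le_trans h1 (leeD2r _ h2).
  rewrite /ysub_obj -(fineK gk_fin) -(fineK fing) -!EFinM -!EFinD lee_fin in h3.
  have := qexp B gh (A *m xt k.+1) b beta t (y k.+1) (y k) (ys - y k.+1) Hsym.
  move=> /= qe; rewrite qe in h3.
  rewrite -/L in h3.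
  nra.
have i3 := ineqg (y k.+1).
rewrite -(fineK fing) -(fineK gk_fin) -EFinD lee_fin in i3.
have Gy : dotv (B^T *m gs) (y k.+1 - ys) <= L by lra.
have e4 : - (B^T *m gh) + beta *: (B^T *m (A *m xt k.+1 + B *m y k.+1 - b)) + H *m (y k.+1 - y k) = - (V + B^T *m gamt k.+1).
  rewrite /V /rk /gh gt_def !(mulmxDl, mulmxBr, mulmxDr, mulmxN, mulmxBl) -?scalemxAl -?scalemxAr.
  rewrite !(mulmxDl, mulmxBr, mulmxDr, mulmxN, mulmxBl) -?scalemxAr !mulmxA.
  apply/colP => i; rewrite !mxE.
  by field.
rewrite /L e4 in Gy.
have c0 : dotv (gamt k.+1 - gs) (A *m xs + B *m ys - b) = 0 by rewrite cons dotv0r.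
rewrite (dotvC (A *m xt k.+1 + _ - _)).
clearbody V.
move: Fm Gy c0.
rewrite !(mulmxDr, mulmxBr, mulmxN, dotvDl, dotvDr, dotvNl, dotvNr, dotv_trl).
lra.
Qed.
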